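(* Let $q$ be a prime power, $m$ odd, $3\le n\le m$, let $g_1,\dots,g_n\in\mathbb{F}_{q^m}$ be linearly independent over $\mathbb{F}_q$, and let $\mathcal{G}$ be the Gabidulin code of dimension $k=1$ with respect to $g_1,\dots,g_n$. Let $f(x)=x^{q^2}+cx$ with $c\in\mathbb{F}_{q^m}$. Then $\sigma_f=(f(g_1),\dots,f(g_n))$ is a deep hole of $\mathcal{G}$ in the rank metric, i.e. $d_R(\sigma_f,\mathcal{G})=n-1$.
   Context: $\mathcal{L}_q(x,\mathbb{F}_{q^m})$ is the set of $q$-linearized polynomials $\sum_i a_ix^{q^i}$ with $a_i\in\mathbb{F}_{q^m}$, $q$-degree being the largest $i$ with $a_i\ne0$. Rank distance: $d_R(\mathbf{u},\mathbf{v})=\dim_{\mathbb{F}_q}\langle u_1-v_1,\dots,u_n-v_n\rangle$, $d_R(\mathbf{u},C)=\min_{\mathbf{c}\in C}d_R(\mathbf{u},\mathbf{c})$; a deep hole is a word attaining the covering radius $\max_{\mathbf{u}}d_R(\mathbf{u},C)$, which for $\mathcal{G}$ is $n-k$. The Gabidulin code of dimension $k$ is $\mathcal{G}=\{(v(g_1),\dots,v(g_n)) : v\in\mathcal{L}_q(x,\mathbb{F}_{q^m}),\ v=0\text{ or }\deg_q(v)<k\}$; for $k=1$ this is $\{(\lambda g_1,\dots,\lambda g_n):\lambda\in\mathbb{F}_{q^m}\}$. *)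

(* Defs.v *)
(* F_q is modelled by a finite field F (q := #|F|, automatically
   a prime power) and F_{q^m} by a field extension L of F with \dim {:L} = m. *)
From HB Require Import structures.
From mathcomp Require Import all_boot all_order all_algebra all_field.
Set Implicit Arguments. Unset Strict Implicit. Unset Printing Implicit Defensive.
Import GRing.Theory.
Local Open Scope ring_scope.

Definition rank_dist (F : finFieldType) (L : fieldExtType F) (n : nat)
  (u v : 'I_n -> L) : nat :=
  \dim <<[seq u i - v i | i : 'I_n]>>%VS.

(* Gabidulin code of dimension k w.r.t. g: words (v(g_1),...,v(g_n)) with
   v = sum_{j<k} a_j x^{q^j} a q-linearized polynomial (v = 0 or deg_q v < k). *)
Definition in_gabidulin (F : finFieldType) (L : fieldExtType F) (n k : nat)
  (g : 'I_n -> L) (u : 'I_n -> L) : Prop :=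
  exists a : 'I_k -> L,
    forall i : 'I_n, u i = \sum_(j < k) a j * g i ^+ (#|F| ^ j)%N.

Definition rank_dist_code (F : finFieldType) (L : fieldExtType F) (n : nat)
  (C : ('I_n -> L) -> Prop) (u : 'I_n -> L) (d : nat) : Prop :=
  (exists2 c, C c & rank_dist u c = d) /\
  (forall c, C c -> (d <= rank_dist u c)%N).

(* Main.v *)
Require Import Defs.
From HB Require Import structures.
From mathcomp Require Import all_boot all_order all_algebra all_field.
From mathcomp Require Import zify.
Import GRing.Theory.
Local Open Scope ring_scope.
Section Aux.
Variables (F : finFieldType) (L : fieldExtType F).
Local Notation q := #|F|.
Lemma qnat : [pchar L].-nat q.
Proof.
have [p pr_p charFp] := finPcharP F.
have charLp : p \in [pchar L] by rewrite (pchar_lalg L).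
rewrite (eq_pnat _ (pcharf_eq charLp)).
have := card_pprimeChar charFp => /= ->.
by rewrite pnatX pnat_id.
Qed.

Definition fq (mu x : L) := x ^+ (q ^ 2) + mu * x.

Lemma fq_linear mu : linear (fq mu).
Proof.
move=> a x y; rewrite /fq.
have Hn : [pchar L].-nat (q ^ 2)%N by rewrite pnatX qnat.
rewrite (exprDn_pchar _ _ Hn) mulrDr -scalerAr.
have -> : (a *: x) ^+ (q ^ 2) = a *: x ^+ (q ^ 2).
  rewrite -[a *: x]mulr_algl exprMn -in_algE -rmorphXn /=.
  by rewrite expnS mulnC expnS muln1 !exprM !expf_card mulr_algl.
by rewrite scalerDr addrACA.
Qed.

HB.instance Definition _ mu := GRing.isLinear.Build F L L *:%R (fq mu) (fq_linear mu).

Lemma fix_q2 (m : nat) (z : L) : \dim {:L} = m -> odd m ->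
  z ^+ (q ^ 2) = z -> z \in 1%VS.
Proof.
move=> Hm Hodd Hz.
have Hfull := Fermat's_little_theorem {:L}%AS z.
rewrite memvf /= in Hfull.
have Hk : forall k, z ^+ (q ^ (2 * k)) = z.
  elim=> [|k IH]; first by rewrite muln0 expn0 expr1.
  by rewrite mulnS expnD exprM Hz IH.
have H1 := Fermat's_little_theorem 1%AS z.
rewrite H1 dimv1 expn1.
have Hq : (#|F| ^ \dim ({:L}%AS : {subfield L}))%N = (q ^ m)%N by congr (_ ^ _)%N; exact: Hm.
move: Hfull; rewrite Hq.
rewrite -(odd_double_half m) Hodd -mul2n add1n expnS mulnC exprM Hk.
by rewrite eq_sym.
Qed.

Lemma ker_dim (m : nat) mu : \dim {:L} = m -> odd m ->
  (\dim (lker (linfun (fq mu))) <= 1)%N.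
Proof.
move=> Hm Hodd.
set K := lker _.
have [->|nzK] := eqVneq K 0%VS; first by rewrite dimv0.
set x0 := vpick K.
have x0K : x0 \in K := memv_pick K.
have nz0 : x0 != 0 by rewrite vpick0.
have hx0 : fq mu x0 = 0 by move: x0K; rewrite memv_ker lfunE => /eqP.
apply: (leq_trans (dimvS (_ : (K <= <[x0]>)%VS))); last by rewrite dim_vline nz0.
apply/subvP => y yK.
have hy : fq mu y = 0 by move: yK; rewrite memv_ker lfunE => /eqP.
have [->|nzy] := eqVneq y 0; first by rewrite mem0v.
have mu0 : mu != 0.
  apply/eqP=> mu0; move: hx0; rewrite /fq mu0 mul0r addr0 => /eqP.
  by rewrite expf_eq0 (negPf nz0) andbF.
set z := y / x0.
have Hz : z ^+ (q ^ 2) = z.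
  have ey : y ^+ (q ^ 2) = - (mu * y) by apply/eqP; rewrite -addr_eq0; apply/eqP.
  have ex : x0 ^+ (q ^ 2) = - (mu * x0) by apply/eqP; rewrite -addr_eq0; apply/eqP.
  rewrite /z exprMn exprVn ey ex invrN mulrNN invfM mulrACA mulfV // mul1r //.
have := @fix_q2 m z Hm Hodd Hz => /vlineP [k Hk].
apply/vlineP; exists k.
by rewrite -[y](divfK nz0) -/z Hk -scalerAl mul1r.
Qed.
End Aux.
Arguments fq {F L}.
Arguments ker_dim {F L}.

Theorem proposition6 (F : finFieldType) (L : fieldExtType F) (m n : nat)
  (g : 'I_n -> L) (c : L) :
  \dim {:L} = m -> odd m -> (3 <= n)%N -> (n <= m)%N ->
  free [seq g i | i : 'I_n] ->
  rank_dist_code (in_gabidulin 1 g)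
    (fun i : 'I_n => g i ^+ (#|F| ^ 2)%N + c * g i) n.-1.
Proof.
move=> Hm Hodd Hn Hnm Hfree.
set X := [seq g i | i : 'I_n].
set U := <<X>>%VS.
have HU : \dim U = n.
  by move/eqP: Hfree; rewrite /X size_map size_enum_ord.
have Hmap : forall a : 'I_1 -> L,
  [seq (g i ^+ (#|F| ^ 2)%N + c * g i) - (\sum_(j < 1) a j * g i ^+ (#|F| ^ j)%N) | i : 'I_n]
  = map (linfun (fq (c - a ord0))) X.
  move=> a; rewrite /X -map_comp; apply: eq_map => i.
  by rewrite /= lfunE /= /fq big_ord1 expn0 expr1 mulrBl addrA.
have Hrk : forall mu, (\dim <<map (linfun (fq mu)) X>> + \dim (U :&: lker (linfun (fq mu))) = n)%N.
  move=> mu; rewrite -limg_span addnC limg_ker_dim //.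
have Hle : forall mu, (\dim (U :&: lker (linfun (fq mu))) <= 1)%N.
  move=> mu; apply: leq_trans (dimvS (capvSr _ _)) (ker_dim m mu Hm Hodd).
split.
- have n0 : (0 < n)%N by apply: leq_trans Hn.
  pose g0 := g (Ordinal n0).
  have g0X : g0 \in X by rewrite /X map_f ?mem_enum.
  have nzg0 : g0 != 0 := free_not0 Hfree g0X.
  pose mu0 := - (g0 ^+ (#|F| ^ 2)%N / g0).
  exists (fun i => \sum_(j < 1) (fun _ => c - mu0) j * g i ^+ (#|F| ^ j)%N).
    by exists (fun _ => c - mu0).
  rewrite /rank_dist.
  have -> := Hmap (fun _ => c - mu0).
  have -> : c - (c - mu0) = mu0 by rewrite opprB addrC subrK.
  have Hge : (1 <= \dim (U :&: lker (linfun (fq mu0))))%N.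
    have <- : \dim <[g0]> = 1%N by rewrite dim_vline nzg0.
    apply: dimvS; rewrite subv_cap; apply/andP; split.
      by rewrite -memvE memv_span.
    by rewrite -memvE memv_ker lfunE /= /fq /mu0 mulNr divfK // subrr.
  move: (Hrk mu0) (Hle mu0) => H2 H1; rewrite -H2.
  have E : \dim (U :&: lker (linfun (fq mu0))) = 1%N by apply/eqP; rewrite eqn_leq H1 Hge.
  by rewrite E addn1.
- move=> u [a Ha].
  rewrite /rank_dist (_ : [seq _ | i : 'I_n] = map (linfun (fq (c - a ord0))) X);
    last by rewrite -Hmap; apply: eq_map => i; rewrite /= Ha.
  move: (Hrk (c - a ord0)) (Hle (c - a ord0)).
  move: (\dim _) (\dim _) => x y; lia.
Qed.
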